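(* Let $S$ be simple random walk on $\mathbb{Z}$ started at $0$ and set $P^t(0,z)=P[S_{2t}=2z]$ for $t\ge1$, $z\ge0$. Then for every $m\ge0$ and every choice of distinct positive integers $t_0,\dots,t_m$, the $(m+1)\times(m+1)$ matrix $\big(P^{t_i}(0,j)\big)_{0\le i,j\le m}$ is non-singular. In particular, for any $r\ge m+1$, every $(m+1)\times(m+1)$ square submatrix of $\big(P^{t}(0,j)\big)_{1\le t\le r,\,0\le j\le m}$ is non-singular. *)

(* Defs.v *)
From mathcomp Require Import all_boot all_order all_algebra.
Set Implicit Arguments. Unset Strict Implicit. Unset Printing Implicit Defensive.
Import Order.TTheory GRing.Theory Num.Theory.
Local Open Scope ring_scope.

(* Simple random walk on Z started at 0: the n steps are i.i.d. uniform
   +1/-1; the sample space is {ffun 'I_n -> bool} with the uniform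
   probability (true = step +1, false = step -1). *)
Definition srw_pos (n : nat) (w : {ffun 'I_n -> bool}) : int :=
  \sum_(i < n) (if w i then 1 else -1).

Definition srw_prob (n : nat) (x : int) : rat :=
  (#|[set w : {ffun 'I_n -> bool} | srw_pos w == x]|)%:R / (2 ^ n)%:R.

Definition Pt (t z : nat) : rat := srw_prob (2 * t) (2 * z)%:Z.

(* Main.v *)
Require Import Defs.
From mathcomp Require Import all_boot all_order all_algebra.
Import GRing.Theory Num.Theory.
Local Open Scope ring_scope.
From mathcomp Require Import zify ring lra.
Import Order.TTheory.
Lemma card_k (n k : nat) :
  #|[set w : {ffun 'I_n -> bool} | #|[set i | w i]| == k]| = 'C(n, k).
Proof.
pose g (w : {ffun 'I_n -> bool}) : {set 'I_n} := [set i | w i].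
pose h (A : {set 'I_n}) : {ffun 'I_n -> bool} := [ffun i => i \in A].
have bij : bijective g.
  exists h => [w|A]; [apply/ffunP => i | apply/setP => i];
    by rewrite /g /h ?ffunE inE ?ffunE.
have -> : [set w : {ffun 'I_n -> bool} | #|[set i | w i]| == k]
   = g @^-1: [set A : {set 'I_n} | #|A| == k].
  by apply/setP => w; rewrite !inE.
rewrite on_card_preimset; last by apply: onW_bij.
by rewrite card_draws card_ord.
Qed.

Lemma srw_posE n (w : {ffun 'I_n -> bool}) :
  srw_pos w = 2 * (#|[set i | w i]|)%:Z - n%:Z.
Proof.
rewrite /srw_pos.
have -> : \sum_(i < n) (if w i then 1 else -1 : int)
   = \sum_(i < n) ((if w i then 2 else 0) - 1).
  by apply: eq_bigr => i _; case: (w i).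
rewrite sumrB sumr_const card_ord -big_mkcond /=.
rewrite (eq_bigl (mem [set i | w i])) ; last by move=> i /=; rewrite inE.
rewrite sumr_const. set k := #|_|. clearbody k. rewrite -mulr_natr mulrC; lia.
Qed.

Lemma card_pos t j :
  #|[set w : {ffun 'I_(2 * t) -> bool} | srw_pos w == (2 * j)%:Z]| = 'C(2 * t, t + j).
Proof.
rewrite -card_k; apply: eq_card => w; rewrite !inE srw_posE.
apply/eqP/eqP; lia.
Qed.

Lemma PtE t j : Pt t j = ('C(2 * t, t + j))%:R / (2 ^ (2 * t))%:R.
Proof. by rewrite /Pt /srw_prob card_pos. Qed.

Lemma bin_id t j :
  ('C(2 * t, t + j) * \prod_(0 <= k < j) (t + k.+1) =
   'C(2 * t, t) * \prod_(0 <= k < j) (t - k))%N.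
Proof.
elim: j => [|j IH]; first by rewrite !big_geq // addn0.
rewrite !big_nat_recr //= mulnA mulnC mulnA addnS mul_bin_left.
have -> : (2 * t - (t + j) = t - j)%N by lia.
by rewrite -mulnA IH mulnC -mulnA.
Qed.

Definition bb (j k : nat) : rat := if (k < j)%N then k%:R else - (k.+1)%:R.
Definition G (m j : nat) : {poly rat} := \prod_(0 <= k < m) ('X - (bb j k)%:P).
Definition Q (m t : nat) : rat := \prod_(0 <= k < m) (t%:R + (k.+1)%:R).

Lemma GE m j x : (j <= m)%N ->
  (G m j).[x] = \prod_(0 <= k < j) (x - k%:R) * \prod_(j <= k < m) (x + (k.+1)%:R).
Proof.
move=> jm; rewrite /G horner_prod (big_cat_nat (leq0n j) jm) /=.
congr (_ * _); apply: eq_big_nat => k /andP [jk kj]; rewrite hornerXsubC /bb.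
  by rewrite kj.
by rewrite ltnNge jk /= opprK.
Qed.

Lemma key m t j : (j <= m)%N -> Pt t j * Q m t = Pt t 0 * (G m j).[t%:R].
Proof.
move=> jm; rewrite GE // /Q (big_cat_nat (leq0n j) jm) /= !PtE addn0.
case: (leqP j t) => jt.
  have := congr1 (fun n : nat => n%:R : rat) (bin_id t j).
  rewrite !natrM !natr_prod => h.
  have -> : \prod_(0 <= k < j) (t%:R - k%:R : rat) = \prod_(0 <= k < j) ((t - k)%N%:R).
    apply: eq_big_nat => k /andP [_ kj]; rewrite natrB //; lia.
  have -> : \prod_(0 <= k < j) (t%:R + (k.+1)%:R : rat) = \prod_(0 <= k < j) ((t + k.+1)%N%:R).
    by apply: eq_bigr => k _; rewrite natrD.
  by rewrite !mulrA; congr (_ * _); rewrite mulrAC h mulrAC.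
rewrite bin_small; last by lia.
have -> : \prod_(0 <= k < j) (t%:R - k%:R : rat) = 0.
  by rewrite (big_cat_nat (leq0n t) (ltnW jt)) /= (big_ltn jt) subrr mul0r mulr0.
by rewrite !(mul0r, mulr0).
Qed.

Lemma Pt0_neq0 t : Pt t 0 != 0.
Proof.
rewrite PtE mulf_neq0 // ?invr_eq0 pnatr_eq0 -lt0n ?bin_gt0 ?expn_gt0 //; lia.
Qed.

Lemma size_G m j : size (G m j) = m.+1.
Proof. by rewrite /G size_prod_XsubC size_iota subn0. Qed.

Lemma G_zero m j s : (s < j)%N -> (j <= m)%N -> (G m j).[s%:R] = 0.
Proof.
move=> sj jm; rewrite /G horner_prod.
have sm : (s < m)%N by lia.
rewrite (big_cat_nat (leq0n s) (ltnW sm)) /= (big_ltn sm) hornerXsubC /bb sj.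
by rewrite subrr mul0r mulr0.
Qed.

Lemma G_nz m j : (j <= m)%N -> (G m j).[j%:R] != 0.
Proof.
move=> jm; rewrite /G horner_prod; rewrite prodf_seq_neq0; apply/allP => k _ /=.
rewrite hornerXsubC /bb; case: ifP => kj.
  by rewrite subr_eq0 eqr_nat; apply/eqP; lia.
by rewrite opprK -natrD pnatr_eq0; lia.
Qed.

Theorem part1 (m : nat) (t : 'I_m.+1 -> nat) : injective t ->
     \det (\matrix_(i < m.+1, j < m.+1) Pt (t i) j) != 0.
Proof.
move=> tinj; rewrite -det_tr; apply/negP => /det0P [v vnz vA].
have hrow i : \sum_(j < m.+1) v 0 j * Pt (t i) j = 0.
  transitivity ((v *m (\matrix_(i < m.+1, j < m.+1) Pt (t i) j)^T) 0 i);
    last by rewrite vA mxE.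
  by rewrite !mxE; apply: eq_bigr => j _; rewrite !mxE.
pose p := \sum_(j < m.+1) v 0 j *: G m j.
have proot i : p.[(t i)%:R] = 0.
  have : Pt (t i) 0 * p.[(t i)%:R] = Q m (t i) * \sum_(j < m.+1) v 0 j * Pt (t i) j.
    rewrite horner_sum !mulr_sumr; apply: eq_bigr => j _.
    rewrite hornerZ mulrCA -key; last by rewrite -ltnS.
    by rewrite mulrA mulrC.
  rewrite hrow mulr0 => /eqP; rewrite mulf_eq0 (negbTE (Pt0_neq0 _)) /=.
  by move/eqP.
have p0 : p = 0.
  apply/eqP; apply: contraT => pnz.
  have := max_poly_roots pnz (rs := map (fun i => (t i)%:R) (enum 'I_m.+1)).
  rewrite size_map size_enum_ord.
  have sp : (size p <= m.+1)%N.
    rewrite /p; apply: (big_ind (fun q : {poly rat} => size q <= m.+1)%N).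
    - by rewrite size_poly0.
    - by move=> q1 q2 h1 h2; apply: leq_trans (size_polyD _ _) _; rewrite geq_max h1 h2.
    - by move=> j _; apply: leq_trans (size_scale_leq _ _) _; rewrite size_G.
  rewrite ltnNge sp; apply.
    by apply/allP => x /mapP [i _ ->]; apply/rootP; exact: proot.
  rewrite map_inj_uniq ?enum_uniq // => i k /eqP; rewrite eqr_nat => /eqP.
  exact: tinj.
have vz : forall s (j : 'I_m.+1), (j < s)%N -> v 0 j = 0.
  elim=> [//|s IH] j; rewrite ltnS leq_eqVlt => /orP [/eqP js|]; last exact: IH.
  have jm : (j <= m)%N by rewrite -ltnS.
  have : p.[j%:R] = 0 by rewrite p0 horner0.
  rewrite horner_sum (bigD1 j) //= big1 ?addr0 => [|k kj].
    by rewrite hornerZ => /eqP; rewrite mulf_eq0 (negbTE (G_nz _ _ jm)) orbF => /eqP.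
  rewrite hornerZ; case: (ltngtP k j) => [kj'|jk|kj'].
  - by rewrite (IH k) ?mul0r // -js.
  - by rewrite G_zero ?mulr0 // -ltnS.
  - by move: kj; rewrite (val_inj kj') eqxx.
move/negP: vnz; apply; apply/eqP/rowP => j; rewrite !mxE.
exact: (vz m.+1).
Qed.

Theorem lemma3p2 (m : nat) :
  (forall t : 'I_m.+1 -> nat, injective t -> (forall i, (0 < t i)%N) ->
     \det (\matrix_(i < m.+1, j < m.+1) Pt (t i) j) != 0)
  /\
  (forall (r : nat), (m.+1 <= r)%N ->
     forall f : 'I_m.+1 -> 'I_r, injective f ->
       \det (rowsub f (\matrix_(t < r, j < m.+1) Pt t.+1 j)) != 0).
Proof.
split; first by move=> t tinj _; exact: part1.
move=> r _ f finj.
have -> : rowsub f (\matrix_(t < r, j < m.+1) Pt t.+1 j)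
        = \matrix_(i < m.+1, j < m.+1) Pt (f i).+1 j.
  by apply/matrixP => i j; rewrite !mxE.
apply: part1 => i k [h]; apply: finj; exact: val_inj.
Qed.
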